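(* Let $\overline{C}(\alpha)$, $0\le\alpha\le 2$, be as defined in the context. Then: (1) For real $0\le\alpha\le2$, $\overline{C}(\alpha)=\overline{C}(2-\alpha)>0$. (2) For real $0\le\alpha_1<\alpha_2\le2$ and $0<\theta<1$, $\overline{C}(\theta\alpha_1+(1-\theta)\alpha_2)\le\overline{C}(\alpha_1)^{\theta}\,\overline{C}(\alpha_2)^{1-\theta}$. (3) For real $0\le\alpha_1<\alpha_2\le1$, $\overline{C}(\alpha_1)\ge\overline{C}(\alpha_2)$; consequently the minimum of $\overline{C}(\alpha)$ over $0\le\alpha\le2$ is attained at $\alpha=1$. (4) For real $0\le\alpha<\tfrac12$, $\overline{C}(\alpha)=\infty$.
   Context: For a strictly increasing sequence $(\lambda_k)_{k=-\infty}^{\infty}$ of real numbers, put $\delta_k:=\min\{\lambda_k-\lambda_{k-1},\lambda_{k+1}-\lambda_k\}$. For $0\le\alpha\le2$, let $\overline{C}(\alpha)$ be the minimum of all constants $C(\alpha)$ such that $$\sum_{m=1}^N\sum_{\substack{n=1\\ n\ne m}}^N\frac{\delta_m^{2-\alpha}\delta_n^{\alpha}t_mt_n}{(\lambda_m-\lambda_n)^2}\le C(\alpha)\sum_{n=1}^N t_n^2$$ holds for every positive integer $N$, every strictly increasing real sequence $(\lambda_k)_{k\in\mathbb Z}$ and all nonnegative reals $t_1,\dots,t_N$; set $\overline{C}(\alpha)=\infty$ if no such real constant exists (with the usual conventions for $\infty$ in the inequalities). *)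

(* Defs.v *)
From HB Require Import structures.
From mathcomp Require Import all_boot all_order all_algebra.
From mathcomp Require Import all_classical all_reals all_analysis.
Set Implicit Arguments. Unset Strict Implicit. Unset Printing Implicit Defensive.
Import Order.TTheory GRing.Theory Num.Theory.
Local Open Scope classical_set_scope.
Local Open Scope ring_scope.

Definition strictly_increasing (R : realType) (lam : int -> R) : Prop :=
  forall i j : int, (i < j)%R -> lam i < lam j.

Definition delta (R : realType) (lam : int -> R) (k : int) : R :=
  Num.min (lam k - lam (k - 1)) (lam (k + 1) - lam k).

Definition lhs (R : realType) (a : R) (N : nat) (lam : int -> R) (t : nat -> R) : R :=
  \sum_(1 <= m < N.+1) \sum_(1 <= n < N.+1 | n != m)
     (delta lam m%:Z `^ (2 - a) * delta lam n%:Z `^ a * t m * t n)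
       / (lam m%:Z - lam n%:Z) ^+ 2.

Definition admissible (R : realType) (a C : R) : Prop :=
  forall (N : nat) (lam : int -> R) (t : nat -> R),
    strictly_increasing lam ->
    (forall n, (1 <= n <= N)%N -> 0 <= t n) ->
    lhs a N lam t <= C * \sum_(1 <= n < N.+1) t n ^+ 2.

(* Cbar(alpha): the least admissible constant, +oo if none exists.
   (The set of admissible constants is an up-closed closed ray, so its
   infimum is a minimum when it is nonempty; ereal_inf of the empty set is +oo.) *)
Definition Cbar (R : realType) (a : R) : \bar R :=
  ereal_inf [set C%:E | C in admissible a].

(* Main.v *)
Require Import Defs.
From HB Require Import structures.
From mathcomp Require Import all_boot all_order all_algebra.
From mathcomp Require Import all_classical all_reals all_analysis.
From mathcomp Require Import ring lra zify.
Import Order.TTheory GRing.Theory Num.Theory.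
Local Open Scope classical_set_scope.
Local Open Scope ring_scope.

Section H.
Variable R : realType.

Lemma amgm (x y th : R) : 0 <= x -> 0 <= y -> 0 < th < 1 ->
  x `^ th * y `^ (1 - th) <= th * x + (1 - th) * y.
Proof.
move=> x0 y0 /andP[t0 t1].
have t1' : 0 < 1 - th by rewrite subr_gt0.
have := @conjugate_powR R (x `^ th) (y `^ (1 - th)) th^-1 (1 - th)^-1
  (powR_ge0 _ _) (powR_ge0 _ _).
rewrite !invr_gt0 t0 t1' => /(_ isT isT).
rewrite !invrK subrKC => /(_ erefl).
rewrite -!powRrM !mulfV ?gt_eqF // !powRr1 //.
by rewrite (mulrC th) (mulrC (1 - th)).
Qed.

Lemma psum_eq0 (I : eqType) (r : seq I) (P : pred I) (F : I -> R) :
  (forall i, P i -> 0 <= F i) -> \sum_(i <- r | P i) F i = 0 ->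
  forall i, i \in r -> P i -> F i = 0.
Proof.
move=> F0; elim: r => [//|x r IH]; rewrite big_cons.
case: ifP => Px.
  move/eqP; rewrite paddr_eq0 ?F0 ?sumr_ge0 // => /andP[/eqP Fx /eqP Fr] i.
  by rewrite in_cons => /orP[/eqP->|ir] //; apply: IH.
by move=> Fr i; rewrite in_cons => /orP[/eqP->|ir]; [rewrite Px | apply: IH].
Qed.

Lemma holder0 (I : eqType) (r : seq I) (P : pred I) (u v : I -> R) th :
  0 < th < 1 -> (forall i, P i -> 0 <= u i) -> (forall i, P i -> 0 <= v i) ->
  \sum_(i <- r | P i) u i `^ th * v i `^ (1 - th) <=
  (\sum_(i <- r | P i) u i) `^ th * (\sum_(i <- r | P i) v i) `^ (1 - th).
Proof.
move=> /andP[t0 t1] u0 v0.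
have th0 : th != 0 by rewrite gt_eqF.
have th1 : 1 - th != 0 by rewrite gt_eqF // subr_gt0.
set U := \sum_(i <- r | P i) u i; set V := \sum_(i <- r | P i) v i.
have U0 : 0 <= U by rewrite sumr_ge0.
have V0 : 0 <= V by rewrite sumr_ge0.
have [Ue|Un] := eqVneq U 0.
  rewrite big_seq_cond big1 ?mulr_ge0 ?powR_ge0 // => i /andP[ir Pi].
  by rewrite (@psum_eq0 _ r P u u0 Ue i ir Pi) powR0 // mul0r.
have [Ve|Vn] := eqVneq V 0.
  rewrite big_seq_cond big1 ?mulr_ge0 ?powR_ge0 // => i /andP[ir Pi].
  by rewrite (@psum_eq0 _ r P v v0 Ve i ir Pi) powR0 // mulr0.
have Up : 0 < U by rewrite lt_neqAle eq_sym Un.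
have Vp : 0 < V by rewrite lt_neqAle eq_sym Vn.
set K := U `^ th * V `^ (1 - th).
apply: (@le_trans _ _ (\sum_(i <- r | P i) K * (th * (u i / U) + (1 - th) * (v i / V)))).
  apply: ler_sum => i Pi.
  have e1 : u i `^ th = U `^ th * (u i / U) `^ th.
    by rewrite -powRM ?divr_ge0 ?u0 ?ltW // mulrCA mulfV // mulr1.
  have e2 : v i `^ (1 - th) = V `^ (1 - th) * (v i / V) `^ (1 - th).
    by rewrite -powRM ?divr_ge0 ?v0 ?ltW // mulrCA mulfV // mulr1.
  rewrite e1 e2.
  rewrite mulrACA /K.
  by apply: ler_wpM2l; [rewrite mulr_ge0 ?powR_ge0 | apply: amgm; rewrite ?divr_ge0 ?u0 ?v0 ?ltW ?t0 ?t1].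
rewrite -big_distrr /= big_split /= -!big_distrr /= -!mulr_suml -/U -/V.
by rewrite !mulfV // !mulr1 subrKC mulr1.
Qed.

Lemma holder1 (I : eqType) (r : seq I) (P : pred I) (u v : I -> R) th :
  0 < th < 1 -> (forall i, i \in r -> P i -> 0 <= u i) ->
  (forall i, i \in r -> P i -> 0 <= v i) ->
  \sum_(i <- r | P i) u i `^ th * v i `^ (1 - th) <=
  (\sum_(i <- r | P i) u i) `^ th * (\sum_(i <- r | P i) v i) `^ (1 - th).
Proof.
move=> th01 u0 v0; rewrite !(big_seq_cond P).
by apply: holder0 => // i /andP[]; [apply: u0 | apply: v0].
Qed.

Definition termf (a : R) (lam : int -> R) (t : nat -> R) (m n : nat) : R :=
  @delta R lam m%:Z `^ (2 - a) * @delta R lam n%:Z `^ a * t m * t n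
    / (lam m%:Z - lam n%:Z) ^+ 2.

Lemma lhsE (a : R) N (lam : int -> R) t : lhs a N lam t =
  \sum_(1 <= m < N.+1) \sum_(1 <= n < N.+1 | n != m) termf a lam t m n.
Proof. by []. Qed.

Lemma delta_gt0 (lam : int -> R) k : strictly_increasing lam -> 0 < delta lam k.
Proof.
move=> Hl; rewrite /delta lt_min !subr_gt0 !Hl //; lia.
Qed.

Lemma termf_ge0 (a : R) (lam : int -> R) t m n : strictly_increasing lam -> 0 <= t m -> 0 <= t n ->
  0 <= termf a lam t m n.
Proof.
move=> Hl tm tn; rewrite /termf.
by rewrite divr_ge0 ?sqr_ge0 // !mulr_ge0 ?powR_ge0.
Qed.

Lemma powR_split (x th : R) : 0 <= x -> x = x `^ th * x `^ (1 - th).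
Proof.
move=> x0; rewrite -powRD; last by rewrite addrC subrK oner_eq0.
by rewrite addrC subrK powRr1.
Qed.

Lemma termf_conv (a1 a2 th : R) (lam : int -> R) t m n : strictly_increasing lam ->
  0 <= t m -> 0 <= t n ->
  termf (th * a1 + (1 - th) * a2) lam t m n =
  termf a1 lam t m n `^ th * termf a2 lam t m n `^ (1 - th).
Proof.
move=> Hl tm tn.
have dm := @delta_gt0 lam m%:Z Hl; have dn := @delta_gt0 lam n%:Z Hl.
set w := t m * t n / (lam m%:Z - lam n%:Z) ^+ 2.
have w0 : 0 <= w by rewrite divr_ge0 ?sqr_ge0 ?mulr_ge0.
have E : forall a, termf a lam t m n =
    delta lam m%:Z `^ (2 - a) * delta lam n%:Z `^ a * w.
  by move=> a; rewrite /termf /w !mulrA.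
rewrite !E; clearbody w.
rewrite !powRM ?mulr_ge0 ?powR_ge0 //.
rewrite -!powRrM.
have -> : 2 - (th * a1 + (1 - th) * a2) = (2 - a1) * th + (2 - a2) * (1 - th) by ring.
have -> : th * a1 + (1 - th) * a2 = a1 * th + a2 * (1 - th) by ring.
rewrite (powRD (x := delta lam m%:Z)); last by rewrite (gt_eqF dm) implybT.
rewrite (powRD (x := delta lam n%:Z)); last by rewrite (gt_eqF dn) implybT.
rewrite {1}(@powR_split w th w0).
ring.
Qed.
Lemma lhs_holder (a1 a2 th : R) N (lam : int -> R) (t : nat -> R) :
  strictly_increasing lam -> (forall n, (1 <= n <= N)%N -> 0 <= t n) ->
  0 < th < 1 ->
  lhs (th * a1 + (1 - th) * a2) N lam t <=
  lhs a1 N lam t `^ th * lhs a2 N lam t `^ (1 - th).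
Proof.
move=> Hl Ht th01; rewrite !lhsE.
have T0 : forall m n, m \in index_iota 1 N.+1 -> n \in index_iota 1 N.+1 ->
    forall a, 0 <= termf a lam t m n.
  by move=> m n; rewrite !mem_index_iota => hm hn a; apply: termf_ge0 => //;
    apply: Ht; lia.
apply: le_trans (@holder1 _ (index_iota 1 N.+1) xpredT
  (fun m => \sum_(1 <= n < N.+1 | n != m) termf a1 lam t m n)
  (fun m => \sum_(1 <= n < N.+1 | n != m) termf a2 lam t m n) th th01 _ _); last first.
- move=> m hm _; rewrite big_seq_cond sumr_ge0 // => n /andP[hn _].
  exact: T0.
- move=> m hm _; rewrite big_seq_cond sumr_ge0 // => n /andP[hn _].
  exact: T0.
rewrite [X in X <= _]big_seq [X in _ <= X]big_seq; apply: ler_sum => m hm.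
apply: le_trans (@holder1 _ (index_iota 1 N.+1) (fun n => n != m)
  (fun n => termf a1 lam t m n) (fun n => termf a2 lam t m n) th th01 _ _); last first.
- by move=> n hn _; apply: T0.
- by move=> n hn _; apply: T0.
rewrite big_seq_cond [X in _ <= X]big_seq_cond; apply: ler_sum => n /andP[hn _].
move: hm hn; rewrite !mem_index_iota => hm hn.
by rewrite termf_conv // Ht //; lia.
Qed.

Lemma lhs_sym (a : R) N (lam : int -> R) (t : nat -> R) :
  lhs (2 - a) N lam t = lhs a N lam t.
Proof.
rewrite !lhsE.
have E : forall m n, termf (2 - a) lam t m n = termf a lam t n m.
  move=> m n; rewrite /termf.
  have -> : 2 - (2 - a) = a by ring.
  have -> : (lam m%:Z - lam n%:Z) ^+ 2 = (lam n%:Z - lam m%:Z) ^+ 2 by ring.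
  ring.
transitivity (\sum_(1 <= m < N.+1) \sum_(1 <= n < N.+1)
   (if n != m then termf a lam t n m else 0)).
  by apply: eq_bigr => m _; rewrite big_mkcond; apply: eq_bigr => n _; rewrite E.
rewrite exchange_big; apply: eq_bigr => n _; rewrite [RHS]big_mkcond.
by apply: eq_bigr => m _; rewrite eq_sym.
Qed.
Definition idl (k : int) : R := k%:~R.

Lemma delta_id (k : int) : delta idl k = 1.
Proof.
rewrite /delta /idl intrB intrD.
have -> : (k%:~R - (k%:~R - 1%:~R) : R) = 1 by ring.
have -> : (k%:~R + 1%:~R - k%:~R : R) = 1 by ring.
by rewrite minxx.
Qed.

Lemma adm_ge1 (a C : R) : admissible a C -> 1 <= C.
Proof.
move/(_ 2%N idl (fun _ => 1)).
have Hl : strictly_increasing idl.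
  by move=> i j; rewrite /idl ltr_int.
move/(_ Hl (fun _ _ => ler01)).
rewrite lhsE /termf unlock /= !delta_id !powR1.
rewrite /idl.
have -> : ((1%:~R : R) - 2%:~R) ^+ 2 = 1.
  by rewrite -[(1%:~R : R)]/(1 : R) -[(2%:~R : R)]/(2 : R); ring.
have -> : ((2%:~R : R) - 1%:~R) ^+ 2 = 1.
  by rewrite -[(1%:~R : R)]/(1 : R) -[(2%:~R : R)]/(2 : R); ring.
rewrite !mul1r !invr1 !expr1n !addr0. lra.
Qed.
Lemma Cbar_ge1 (a : R) : (1 <= Cbar a)%E.
Proof.
rewrite /Cbar; apply: le_ereal_inf_tmp => _ [C HC <-]; rewrite lee_fin.
exact: adm_ge1 HC.
Qed.

Lemma Cbar_le (a C : R) : admissible a C -> (Cbar a <= C%:E)%E.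
Proof. by move=> HC; apply: ereal_inf_lbound; exists C. Qed.

Lemma Cbar_adm (a x : R) : Cbar a = x%:E -> admissible a x.
Proof.
move=> Hx N lam t Hl Ht.
set S := \sum_(1 <= n < N.+1) t n ^+ 2.
set L := lhs a N lam t.
have S0 : 0 <= S by apply: sumr_ge0 => i _; exact: sqr_ge0.
rewrite leNgt; apply/negP => Hlt.
move: S0; rewrite le_eqVlt => /orP[/eqP S00|Sp].
  have : (Cbar a < +oo)%E by rewrite Hx ltry.
  move/ereal_inf_lt => [_ [C HC <-] _].
  have := HC N lam t Hl Ht; rewrite -/S -/L -S00 mulr0.
  by move: Hlt; rewrite -S00 mulr0 => /lt_le_trans H /H; rewrite ltxx.
have : (Cbar a < (L / S)%:E)%E by rewrite Hx lte_fin ltr_pdivlMr.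
move/ereal_inf_lt => [_ [C HC <-]]; rewrite lte_fin ltr_pdivlMr // => HCL.
have := HC N lam t Hl Ht; rewrite -/S -/L.
by move=> /(lt_le_trans HCL); rewrite ltxx.
Qed.

Lemma Cbar_sym (a : R) : Cbar (2 - a) = Cbar a.
Proof.
rewrite /Cbar; have -> : admissible (2 - a) = admissible a.
  apply/funext => C; apply/propext; rewrite /admissible.
  by split => H N lam t Hl Ht; [rewrite -lhs_sym | rewrite lhs_sym]; apply: H.
by [].
Qed.
Lemma lhs_ge0 (a : R) N (lam : int -> R) (t : nat -> R) :
  strictly_increasing lam -> (forall n, (1 <= n <= N)%N -> 0 <= t n) ->
  0 <= lhs a N lam t.
Proof.
move=> Hl Ht; rewrite lhsE big_seq sumr_ge0 // => m hm.
rewrite big_seq_cond sumr_ge0 // => n /andP[hn _].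
move: hm hn; rewrite !mem_index_iota => hm hn.
by apply: termf_ge0 => //; apply: Ht; lia.
Qed.

Lemma Cbar_conv (a1 a2 th : R) : 0 < th < 1 ->
  (Cbar (th * a1 + (1 - th) * a2) <= Cbar a1 `^ th * Cbar a2 `^ (1 - th))%E.
Proof.
move=> th01; have /andP[t0 t1] := th01.
have th0 : th != 0 by rewrite gt_eqF.
have th1 : 1 - th != 0 by rewrite gt_eqF // subr_gt0.
have G1 := Cbar_ge1 a1; have G2 := Cbar_ge1 a2.
case E1: (Cbar a1) G1 => [x1| |] G1 //; case E2: (Cbar a2) G2 => [x2| |] G2 //.
- have A1 := @Cbar_adm a1 x1 E1; have A2 := @Cbar_adm a2 x2 E2.
  have x10 : 0 <= x1 := le_trans ler01 (@adm_ge1 a1 x1 A1).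
  have x20 : 0 <= x2 := le_trans ler01 (@adm_ge1 a2 x2 A2).
  rewrite !poweR_EFin -EFinM; apply: Cbar_le => N lam t Hl Ht.
  apply: le_trans (@lhs_holder a1 a2 th N lam t Hl Ht th01) _.
  set S := \sum_(1 <= n < N.+1) t n ^+ 2.
  have S0 : 0 <= S by apply: sumr_ge0 => i _; exact: sqr_ge0.
  apply: (@le_trans _ _ ((x1 * S) `^ th * (x2 * S) `^ (1 - th))).
    have t0' : 0 <= th by exact: ltW.
    have t1' : 0 <= 1 - th by rewrite subr_ge0 ltW.
    apply: ler_pM; rewrite ?powR_ge0 //; apply: ge0_ler_powR;
      rewrite ?nnegrE ?(@lhs_ge0 _ N lam t Hl Ht) ?mulr_ge0 //.
    + exact: A1.
    + exact: A2.
  rewrite !powRM // mulrACA -(@powR_split S th S0).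
  by [].
- rewrite poweR_EFin poweRyr // gt0_muley ?leey // lte_fin powR_gt0 //.
  by move: G1; rewrite lee_fin; apply: lt_le_trans.
- rewrite poweRyr // gt0_mulye ?leey // poweR_EFin lte_fin powR_gt0 //.
  by move: G2; rewrite lee_fin; apply: lt_le_trans.
- by rewrite !poweRyr // mulyy leey.
Qed.
Definition lamc (e : R) (k : int) : R :=
  if k <= 1 then (k - 1)%:~R else 1 + (k - 2)%:~R * e.

Lemma lamc_le e k : k <= 1 -> lamc e k = (k - 1)%:~R.
Proof. by move=> h; rewrite /lamc h. Qed.

Lemma lamc_gt e k : 1 < k -> lamc e k = 1 + (k - 2)%:~R * e.
Proof. by move=> h; rewrite /lamc leNgt h. Qed.

Lemma lamc_inc e : 0 < e -> strictly_increasing (lamc e).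
Proof.
move=> e0 i j ij.
case: (leP i 1) => hi; case: (leP j 1) => hj.
- by rewrite !lamc_le // ltr_int; lia.
- rewrite lamc_le // lamc_gt //.
  apply: (@le_lt_trans _ _ 0); first by rewrite lerz0; lia.
  rewrite ltr_pwDl //; apply: mulr_ge0; [rewrite ler0z; lia | exact: ltW].
- lia.
- by rewrite !lamc_gt // ltrD2l ltr_pM2r // ltr_int; lia.
Qed.

Lemma lamc_nat e (n : nat) : (2 <= n)%N -> lamc e n%:Z = 1 + (n%:R - 2) * e.
Proof.
move=> h; rewrite lamc_gt; last by lia.
by rewrite intrB -!pmulrn.
Qed.

Lemma delta_lamc1 e : 0 < e -> delta (lamc e) 1 = 1.
Proof.
move=> e0; rewrite /delta.
rewrite (_ : (1 - 1 : int) = 0) // (_ : (1 + 1 : int) = 2) //.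
rewrite (@lamc_nat e 2 isT) !lamc_le //.
rewrite !intrB -!pmulrn.
have -> : (1 - 1 - (0 - 1) : R) = 1 by ring.
have -> : (1 + (2 - 2) * e - (1 - 1) : R) = 1 by ring.
by rewrite minxx.
Qed.

Lemma delta_lamcn e (n : nat) : 0 < e <= 1 -> (2 <= n)%N -> delta (lamc e) n%:Z = e.
Proof.
move=> /andP[e0 e1] hn; rewrite /delta.
have -> : (n%:Z + 1) = (n.+1)%:Z by rewrite -addn1.
rewrite !lamc_nat //; last by lia.
have -> : (1 + (n.+1%:R - 2) * e) - (1 + (n%:R - 2) * e) = e.
  by rewrite -addn1 natrD; ring.
apply: min_r.
case: n hn => [//|[//|[|n]]] _.
  rewrite lamc_le // (_ : ((2:nat)%:Z - 1 - 1 : int) = 0) //.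
  by rewrite -pmulrn mulr0n subr0 (_ : (2 - 2 : R) = 0) ?mul0r ?addr0 // subrr.
rewrite (_ : (n.+3%:Z - 1 : int) = n.+2%:Z); last by lia.
rewrite lamc_nat //.
have -> : (1 + (n.+3%:R - 2) * e) - (1 + (n.+2%:R - 2) * e) = e.
  by rewrite -(addn1 n.+2) natrD; ring.
by [].
Qed.
Lemma blowup (a C : R) : 0 <= a -> a < 2^-1 -> admissible a C -> False.
Proof.
move=> a0 ah HC.
have C1 := @adm_ge1 a C HC.
set p := 1 - 2 * a.
have p0 : 0 < p by rewrite /p; lra.
set X := (8 * C + 1) `^ p^-1.
have X0 : 0 <= X by exact: powR_ge0.
set j := (Num.bound X).+1.
have jX : X < j%:R.
  apply: (lt_le_trans (archi_boundP X0)); rewrite ler_nat /j; lia.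
have j1 : (1 <= j%:R :> R) by rewrite ler1n /j.
have j0 : (0 < j%:R :> R) by apply: lt_le_trans j1.
have jp : 8 * C + 1 < j%:R `^ p.
  have := @gt0_ltr_powR R p p0 X (j%:R) X0 (ltW j0) jX.
  by rewrite /X -powRrM mulVf ?gt_eqF // powRr1 // addr_ge0 ?mulr_ge0 // (le_trans ler01 C1).
set e := ((j%:R : R) ^+ 2)^-1.
have e0 : 0 < e by rewrite invr_gt0 exprn_gt0.
have e1 : e <= 1 by rewrite invf_le1 ?exprn_gt0 // exprn_ege1.
have ea : j%:R * e `^ a = j%:R `^ p.
  rewrite /e -powR_invn ?ltW // -powRrM.
  rewrite -{1}(powRr1 (ltW j0)) -powRD; last by rewrite (gt_eqF j0) implybT.
  by rewrite /p; congr (_ `^ _); ring.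
pose t := fun n : nat => if n == 1%N then 1 else (j%:R : R)^-1.
have t0 : forall n, 0 <= t n.
  by move=> n; rewrite /t; case: ifP => _; rewrite ?ler01 // invr_ge0 ltW.
have := HC (j * j).+1 (lamc e) t (@lamc_inc e e0) (fun n _ => t0 n).
have -> : \sum_(1 <= n < (j * j).+2) t n ^+ 2 = 2.
  rewrite big_ltn // (@eq_big_nat _ _ _ 2 _ _ (fun _ => (j%:R : R)^-1 ^+ 2)); last first.
    by move=> n /andP[hn _]; rewrite /t; case: ifP => // /eqP h; move: hn; rewrite h.
  rewrite sumr_const_nat !subSS subn0 /t eqxx -(mulr_natr _ (j * j)) natrM.
  by field; rewrite gt_eqF.
set N := (j * j).+1.
have L : (j * j)%:R * (e `^ a * (j%:R)^-1 / 4) <= lhs a N (lamc e) t.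
  rewrite lhsE big_ltn //.
  apply: (@le_trans _ _ (\sum_(1 <= n < N.+1 | n != 1%N) termf a (lamc e) t 1 n)); last first.
    rewrite lerDl; apply: sumr_ge0 => m _; apply: sumr_ge0 => n _.
    exact: termf_ge0 (@lamc_inc e e0) (t0 m) (t0 n).
  rewrite big_ltn_cond //=.
  have Hp : forall i, ((2 <= i < N.+1)%N && (i != 1%N)) = ((2 <= i < N.+1)%N && true).
    move=> i; rewrite andbT; apply/andb_idr => /andP[h _].
    by apply/eqP => e'; rewrite e' in h.
  rewrite big_nat_cond (eq_bigl _ _ Hp).
  apply: (@le_trans _ _ (\sum_(2 <= n < N.+1) (e `^ a * (j%:R)^-1 / 4))).
    by rewrite sumr_const_nat /N !subSS subn0 mulr_natl.
  rewrite [X in X <= _]big_nat_cond; apply: ler_sum => n /andP[/andP[h1 h2] _].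
  rewrite /termf delta_lamc1 // delta_lamcn ?e0 ?e1 // (@lamc_nat e n h1) lamc_le //.
  rewrite powR1 /t eqxx.
  have -> : (n == 1%N) = false by apply/negbTE/eqP => e'; rewrite e' in h1.
  have D0 : 0 <= (n%:R - 2) * e.
    apply: mulr_ge0; last exact: ltW.
    by rewrite subr_ge0 (ler_nat R 2 n).
  have D1 : (n%:R - 2) * e <= 1.
    rewrite /e ler_pdivrMr ?exprn_gt0 // mul1r expr2 -natrM.
    have : (n%:R : R) <= (j * j).+1%:R by rewrite ler_nat.
    rewrite -addn1 natrD; lra.
  rewrite (_ : (1%:Z - 1)%:~R = 0 :> R) ?subrr //.
  rewrite mul1r mulr1 -!mulrA.
  apply: ler_wpM2l; first exact: powR_ge0.
  apply: ler_wpM2l; first by rewrite invr_ge0 ltW.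
  rewrite lef_pV2 ?posrE //; last by rewrite exprn_even_gt0 //; lra.
  nra.
move=> H; have := le_trans L H.
rewrite natrM.
have -> : j%:R * j%:R * (e `^ a * j%:R^-1 / 4) = (j%:R * e `^ a) / 4.
  by field; rewrite gt_eqF.
rewrite ea; lra.
Qed.

End H.

Lemma pow_split_e (R : realType) (x : \bar R) (th : R) : (1 <= x)%E -> 0 < th < 1 ->
  (x `^ th * x `^ (1 - th))%E = x.
Proof.
move=> x1 /andP[t0 t1].
have th0 : th != 0 by rewrite gt_eqF.
have th1 : 1 - th != 0 by rewrite gt_eqF // subr_gt0.
case: x x1 => [x| |] //= x1.
- rewrite -EFinM -powR_split //.
  by move: x1; rewrite lee_fin; apply: le_trans.
- by rewrite (negbTE th0) (negbTE th1) mulyy.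
Qed.

Theorem theorem3 (R : realType) :
  (* (1) symmetry and positivity *)
  (forall a : R, 0 <= a <= 2 ->
     Cbar a = Cbar (2 - a) /\ (0 < Cbar a)%E) /\
  (* (2) log-convexity *)
  (forall a1 a2 th : R, 0 <= a1 -> a1 < a2 -> a2 <= 2 -> 0 < th < 1 ->
     (Cbar (th * a1 + (1 - th) * a2) <=
        (Cbar a1 `^ th) * (Cbar a2 `^ (1 - th)))%E) /\
  (* (3) monotonicity on [0,1] and minimum at 1 *)
  (forall a1 a2 : R, 0 <= a1 -> a1 < a2 -> a2 <= 1 ->
     (Cbar a2 <= Cbar a1)%E) /\
  (forall a : R, 0 <= a <= 2 -> (Cbar 1 <= Cbar a)%E) /\
  (* (4) blow-up for alpha < 1/2 *)
  (forall a : R, 0 <= a -> a < 2^-1 -> Cbar a = +oo%E).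
Proof.
have mono : forall a1 a2 : R, 0 <= a1 -> a1 < a2 -> a2 <= 1 ->
     (Cbar a2 <= Cbar a1)%E.
  move=> a1 a2 h0 h12 h2.
  set th := (2 - a1 - a2) / (2 - 2 * a1).
  have den : 0 < 2 - 2 * a1 by lra.
  have th01 : 0 < th < 1.
    apply/andP; split; first by rewrite /th divr_gt0 //; lra.
    by rewrite /th ltr_pdivrMr // mul1r; lra.
  have -> : a2 = th * a1 + (1 - th) * (2 - a1).
    by rewrite /th; field; rewrite gt_eqF.
  apply: le_trans (Cbar_conv R a1 (2 - a1) th th01) _.
  by rewrite Cbar_sym pow_split_e // Cbar_ge1.
split.
  move=> a _; split; first by rewrite Cbar_sym.
  by apply: lt_le_trans (Cbar_ge1 _ _); rewrite lte01.
split; first by move=> a1 a2 th _ _ _; exact: Cbar_conv.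
split; first exact: mono.
split.
  move=> a /andP[a0 a2].
  have [h|h|h] := ltgtP a 1.
  - exact: mono.
  - rewrite -(Cbar_sym _ a); apply: mono; lra.
  - by rewrite h.
move=> a a0 ah; rewrite /Cbar; apply/ereal_inf_pinfty => x [C HC <-].
by exfalso; exact: (@blowup R a C a0 ah HC).
Qed.
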